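(* In the setting of error-feedback sparsification below, with $O_k\in(0,1)$, define $m_k^{t+1}=m_{B,k}^{t+1}m_{A,k}^{t+1}\in\mathbb{R}^{d\times\ell}$. Then for every $t\ge0$, $$\mathbb{E}\left[\left\|m_k^{t+1}\right\|_F\right] \leq \frac{2(1-O_k)}{O_k^2}\max_{0\leq i \leq t}\|\Delta\tilde{\theta}_k^i\|_F^2.$$
   Context: Setting: LoRA factors $\theta_B\in\mathbb{R}^{d\times r}$, $\theta_A\in\mathbb{R}^{r\times\ell}$. Let $q=r(d+\ell)$ and let $\mathcal{S}:\mathbb{R}^{q}\to\mathbb{R}^{q}$ be a (possibly random) sparsification operator keeping $u=O_kq$ nonzero entries ($0<u<q$) with $\mathbb{E}\|\mathcal{S}(x)-x\|_2^2\le(1-u/q)\|x\|_2^2$ for all $x$. Client $k$ has memories $m_{B,k}^t\in\mathbb{R}^{d\times r}$, $m_{A,k}^t\in\mathbb{R}^{r\times\ell}$ and concatenations $\tilde m_k^t=[m_{B,k}^{t\mathsf T}\ m_{A,k}^t]$, $\Delta\tilde\theta_k^t=[\Delta\theta_{B,k}^{t\mathsf T}\ \Delta\theta_{A,k}^t]$, $\tilde\theta_k^t=[\theta_{B,k}^{t\mathsf T}\ \theta_{A,k}^t]$ (identified with vectors in $\mathbb{R}^q$), where $\Delta\theta_{B,k}^t,\Delta\theta_{A,k}^t$ are the locally trained factors (trained with a near-orthogonality regularized loss), $\tilde\theta_k^t=\mathcal{S}(\tilde m_k^t+\Delta\tilde\theta_k^t)$, $\tilde m_k^{t+1}=\tilde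 m_k^t+\Delta\tilde\theta_k^t-\tilde\theta_k^t$, and $\tilde m_k^0=0$. Expectation is over the randomness of $\mathcal{S}$. *)

(* Defs.v *)
From HB Require Import structures.
From mathcomp Require Import all_boot all_order all_algebra.
Set Implicit Arguments. Unset Strict Implicit. Unset Printing Implicit Defensive.
Import Order.TTheory GRing.Theory Num.Theory.
Local Open Scope ring_scope.

Definition frob (R : rcfType) (m n : nat) (M : 'M[R]_(m, n)) : R :=
  Num.sqrt (\sum_(i < m) \sum_(j < n) M i j ^+ 2).

Definition keep_mask (R : rcfType) (m n : nat) (I : {set 'I_m * 'I_n})
    (M : 'M[R]_(m, n)) : 'M[R]_(m, n) :=
  \matrix_(i, j) (if (i, j) \in I then M i j else 0).

Definition concat (R : rcfType) (d r l : nat) (B : 'M[R]_(d, r)) (A : 'M[R]_(r, l))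
  : 'M[R]_(r, d + l) := row_mx B^T A.

Definition factB (R : rcfType) (d r l : nat) (M : 'M[R]_(r, d + l)) : 'M[R]_(d, r) :=
  (lsubmx M)^T.
Definition factA (R : rcfType) (d r l : nat) (M : 'M[R]_(r, d + l)) : 'M[R]_(r, l) :=
  rsubmx M.

(* The random sparsifier S is described by its law: given the input x, the set
   of kept coordinates I is drawn with probability K x I (fresh, independent
   randomness at each round).  Error-feedback process:
     x_t = m_t + Delta_t,  theta_t = S(x_t) = mask I_t x_t,
     m_{t+1} = x_t - theta_t.
   [EF_expect K Delta n t0 M f] is the expectation of f(m_{t0+n}) given m_{t0} = M. *)
Fixpoint EF_expect (R : rcfType) (r n : nat)
    (K : 'M[R]_(r, n) -> {set 'I_r * 'I_n} -> R)
    (Delta : nat -> 'M[R]_(r, n)) (steps t0 : nat) (M : 'M[R]_(r, n))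
    (f : 'M[R]_(r, n) -> R) : R :=
  match steps with
  | 0 => f M
  | s.+1 =>
      \sum_(I : {set 'I_r * 'I_n})
        K (M + Delta t0) I *
        EF_expect K Delta s t0.+1 ((M + Delta t0) - keep_mask I (M + Delta t0)) f
  end.

(* Main.v *)
From HB Require Import structures.
From mathcomp Require Import all_boot all_order all_algebra.
From mathcomp Require Import ring lra.
Import Order.TTheory GRing.Theory Num.Theory.
Local Open Scope ring_scope.

Require Import Defs.
Set Implicit Arguments. Unset Strict Implicit.
Section S.
Variable R : rcfType.

Definition sq (m n : nat) (M : 'M[R]_(m, n)) : R := \sum_i \sum_j M i j ^+ 2.

Lemma sq_ge0 m n (M : 'M[R]_(m, n)) : 0 <= sq M.
Proof. by apply: sumr_ge0 => i _; apply: sumr_ge0 => j _; exact: sqr_ge0. Qed.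

Lemma frob2 m n (M : 'M[R]_(m, n)) : frob M ^+ 2 = sq M.
Proof. by rewrite /frob sqr_sqrtr // sq_ge0. Qed.

Lemma CS n (x y : 'I_n -> R) :
  (\sum_k x k * y k) ^+ 2 <= (\sum_k x k ^+ 2) * (\sum_k y k ^+ 2).
Proof.
have H0 : 0 <= \sum_k \sum_k' (x k * y k' - x k' * y k) ^+ 2.
  by apply: sumr_ge0 => i _; apply: sumr_ge0 => j _; exact: sqr_ge0.
have E1 : (\sum_k x k ^+ 2) * (\sum_k y k ^+ 2) =
   \sum_k \sum_k' x k ^+ 2 * y k' ^+ 2.
  by rewrite mulr_suml; apply: eq_bigr => k _; rewrite mulr_sumr.
have E2 : (\sum_k x k ^+ 2) * (\sum_k y k ^+ 2) =
   \sum_k \sum_k' x k' ^+ 2 * y k ^+ 2.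
  by rewrite mulrC mulr_suml; apply: eq_bigr => k _; rewrite mulr_sumr;
     apply: eq_bigr => k' _; rewrite mulrC.
have E3 : (\sum_k x k * y k) ^+ 2 =
   \sum_k \sum_k' (x k * y k) * (x k' * y k').
  by rewrite expr2 mulr_suml; apply: eq_bigr => k _; rewrite mulr_sumr.
have E4 : \sum_k \sum_k' (x k * y k' - x k' * y k) ^+ 2 =
   (\sum_k \sum_k' x k ^+ 2 * y k' ^+ 2 + \sum_k \sum_k' x k' ^+ 2 * y k ^+ 2)
   - 2 * \sum_k \sum_k' (x k * y k) * (x k' * y k').
  rewrite mulr_sumr -big_split -sumrB /=; apply: eq_bigr => k _.
  rewrite mulr_sumr -big_split -sumrB /=; apply: eq_bigr => k' _; ring.
rewrite E4 -E1 -E2 -E3 in H0.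
lra.
Qed.

Lemma sq_mul d r l (B : 'M[R]_(d, r)) (A : 'M[R]_(r, l)) :
  sq (B *m A) <= sq B * sq A.
Proof.
rewrite /sq.
have -> : \sum_(k < r) \sum_(j < l) A k j ^+ 2 = \sum_(j < l) \sum_(k < r) A k j ^+ 2.
  exact: exchange_big.
rewrite mulr_suml; apply: ler_sum => i _.
rewrite mulr_sumr; apply: ler_sum => j _.
rewrite mxE; exact: (CS (fun k => B i k) (fun k => A k j)).
Qed.

Lemma sq_split d r l (M : 'M[R]_(r, d + l)) :
  sq (factB M) + sq (factA M) = sq M.
Proof.
rewrite /sq /factB /factA.
have -> : \sum_(i < d) \sum_(j < r) (lsubmx M)^T i j ^+ 2 =
          \sum_(j < r) \sum_(i < d) M j (lshift l i) ^+ 2.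
  by rewrite exchange_big; apply: eq_bigr => j _; apply: eq_bigr => i _; rewrite !mxE.
rewrite -big_split; apply: eq_bigr => j _ /=.
rewrite big_split_ord /=; congr (_ + _); apply: eq_bigr => k _; by rewrite !mxE.
Qed.

Lemma frob_prod d r l (M : 'M[R]_(r, d + l)) :
  frob (factB M *m factA M) <= sq M / 2.
Proof.
rewrite -sq_split.
set x := sq (factB M); set y := sq (factA M).
have hx : 0 <= x by exact: sq_ge0.
have hy : 0 <= y by exact: sq_ge0.
have hs : 0 <= (x + y) / 2 by lra.
rewrite -(ger0_norm hs) -sqrtr_sqr /frob ler_sqrt; last exact: sqr_ge0.
apply: le_trans (sq_mul _ _) _; rewrite -/x -/y.
have := sqr_ge0 (x - y); rewrite -/x -/y; nra.
Qed.

Lemma sq_young m n (M D : 'M[R]_(m, n)) (e f : R) :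
  0 < e -> e * f = 1 ->
  sq (M + D) <= (1 + e) * sq M + (1 + f) * sq D.
Proof.
move=> e0 ef.
have f0 : 0 <= f.
  have : 0 < e * f by rewrite ef.
  by rewrite pmulr_rgt0 // => /ltW.
rewrite /sq !mulr_sumr -big_split; apply: ler_sum => i _.
rewrite !mulr_sumr -big_split; apply: ler_sum => j _ /=.
rewrite mxE.
set a := M i j; set b := D i j.
have h := mulr_ge0 f0 (sqr_ge0 (e * a - b)).
have E : f * (e * a - b) ^+ 2 = (e * f) * e * a ^+ 2 - 2 * (e * f) * a * b + f * b ^+ 2 by ring.
move: h; rewrite E ef !mul1r.
have -> : (a + b) ^+ 2 = a^+2 + 2 * a * b + b ^+ 2 by ring.
lra.
Qed.

End S.
Set Implicit Arguments. Unset Strict Implicit.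

Section EF.
Variables (R : rcfType) (r n : nat) (K : 'M[R]_(r, n) -> {set 'I_r * 'I_n} -> R)
  (Delta : nat -> 'M[R]_(r, n)).
Hypothesis Kge0 : forall x I, 0 <= K x I.
Hypothesis Ksum : forall x, \sum_I K x I = 1.

Lemma EF_mono s t0 M (f g : 'M[R]_(r, n) -> R) : (forall X, f X <= g X) ->
  EF_expect K Delta s t0 M f <= EF_expect K Delta s t0 M g.
Proof.
move=> fg; elim: s t0 M => [|s IH] t0 M /=; first exact: fg.
apply: ler_sum => I _; apply: ler_wpM2l => //; exact: IH.
Qed.

Lemma EF_scale s t0 M (f : 'M[R]_(r, n) -> R) c :
  EF_expect K Delta s t0 M (fun X => c * f X) = c * EF_expect K Delta s t0 M f.
Proof.
elim: s t0 M => [|s IH] t0 M //=.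
rewrite mulr_sumr; apply: eq_bigr => I _; by rewrite IH mulrCA.
Qed.

Variables (T : nat) (rho B : R).
Hypothesis rho0 : 0 <= rho.
Hypothesis step : forall t0, (t0 < T)%N -> forall M,
  \sum_I K (M + Delta t0) I * sq ((M + Delta t0) - keep_mask I (M + Delta t0))
   <= rho * sq M + (1 - rho) * B.

Lemma EF_main s t0 M : (t0 + s <= T)%N ->
  EF_expect K Delta s t0 M (@sq R r n) <= rho ^+ s * sq M + (1 - rho ^+ s) * B.
Proof.
elim: s t0 M => [|s IH] t0 M /= hT.
  by rewrite expr0 mul1r subrr mul0r addr0.
set x := M + Delta t0.
apply: (@le_trans _ _ (\sum_I K x I * (rho ^+ s * sq (x - keep_mask I x) + (1 - rho ^+ s) * B))).
  2: idtac.
  apply: ler_sum => I _; apply: ler_wpM2l => //; apply: IH.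
  by rewrite addSnnS.
under eq_bigr do rewrite mulrDr.
rewrite big_split /= -mulr_suml Ksum mul1r.
under eq_bigr do rewrite mulrCA.
rewrite -mulr_sumr.
have h := step (t0 := t0) _ M.
have hs : (t0 < T)%N by rewrite -addn1; apply: leq_trans hT; rewrite leq_add2l.
have := ler_wpM2l (exprn_ge0 s rho0) (h hs).
rewrite -/x exprS.
move=> H; apply: le_trans (lerD H (lexx _)) _.
rewrite le_eqVlt; apply/orP; left; apply/eqP; ring.
Qed.
End EF.
Unset Implicit Arguments.
Theorem corollary1 (R : rcfType) (d r l u : nat)
    (K : 'M[R]_(r, d + l) -> {set 'I_r * 'I_(d + l)} -> R)
    (DeltaB : nat -> 'M[R]_(d, r)) (DeltaA : nat -> 'M[R]_(r, l)) (t : nat) :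
  let q := (r * (d + l))%N in
  let O := u%:R / q%:R : R in
  let Delta := fun i => concat (DeltaB i) (DeltaA i) in
  (0 < u)%N -> (u < q)%N ->
  (forall x I, 0 <= K x I) ->
  (forall x, \sum_(I : {set 'I_r * 'I_(d + l)}) K x I = 1) ->
  (forall x I, K x I != 0 -> (#|I| = u)%N) ->
  (forall x, \sum_(I : {set 'I_r * 'I_(d + l)}) K x I * frob (x - keep_mask I x) ^+ 2
             <= (1 - O) * frob x ^+ 2) ->
  EF_expect K Delta t.+1 0 0
    (fun M => frob (@factB R d r l M *m @factA R d r l M))
  <= 2 * (1 - O) / O ^+ 2 *
     \big[Num.max/0]_(i < t.+1) frob (Delta i) ^+ 2.
Proof.
move=> q O Delta u0 uq Kge0 Ksum _ Hsp.
have q0 : (0 < q)%N by apply: leq_trans uq.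
have O0 : 0 < O by rewrite /O divr_gt0 // ltr0n.
have O1 : O < 1 by rewrite /O ltr_pdivrMr ?ltr0n // mul1r ltr_nat.
have On0 : O != 0 by rewrite gt_eqF.
set D := \big[Num.max/0]_(i < t.+1) frob (Delta i) ^+ 2.
have hD : forall i, (i < t.+1)%N -> sq (Delta i) <= D.
  move=> i hi; rewrite -frob2.
  exact: (le_bigmax 0 (fun j : 'I_t.+1 => frob (Delta j) ^+ 2) (Ordinal hi)).
have D0 : 0 <= D by apply: le_trans (hD 0%N isT); exact: sq_ge0.
set a := 1 - O.
have a0 : 0 <= a by rewrite /a; lra.
set rho := a * (1 + O / 2).
set Bb := 4 * a / O ^+ 2 * D.
have rho0 : 0 <= rho by rewrite /rho; apply: mulr_ge0 => //; lra.
have rho1 : rho <= 1.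
  rewrite /rho /a; have : 0 <= O * O by nra. lra.
have key : (1 - rho) * (4 * a / O ^+ 2) - a * (1 + 2 / O) = a.
  by rewrite /rho /a; field.
have step : forall t0, (t0 < t.+1)%N -> forall M,
  \sum_I K (M + Delta t0) I * sq ((M + Delta t0) - keep_mask I (M + Delta t0))
   <= rho * sq M + (1 - rho) * Bb.
  move=> t0 ht0 M.
  have h1 := Hsp (M + Delta t0); rewrite frob2 in h1.
  under eq_bigr => I _ do rewrite -frob2.
  have ef : O / 2 * (2 / O) = 1 by field.
  have h2 := sq_young M (Delta t0) (e := O / 2) (f := 2 / O) ltac:(lra) ef.
  have h3 := hD _ ht0.
  apply: le_trans h1 _.
  have h4 := ler_wpM2l a0 h2.
  apply: le_trans h4 _.
  have f0 : 0 <= a * (1 + 2 / O).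
    apply: mulr_ge0 => //; have : 0 <= 2 / O by rewrite divr_ge0 // ltW.
    lra.
  have h5 := ler_wpM2l f0 h3.
  rewrite /Bb mulrA.
  have : (1 - rho) * (4 * a / O ^+ 2) * D = a * (1 + 2 / O) * D + a * D.
    move: key; set X := (1 - rho) * _; set Y := a * _ => key.
    by rewrite -key; ring.
  move=> ->.
  have : 0 <= a * D by exact: mulr_ge0.
  rewrite /rho. 
  have -> : a * ((1 + O / 2) * sq M + (1 + 2 / O) * sq (Delta t0)) =
    a * (1 + O / 2) * sq M + a * (1 + 2 / O) * sq (Delta t0) by ring.
  lra.
have main := EF_main Kge0 Ksum rho0 step (s := t.+1) (t0 := 0%N) 0 (leqnn _).
have sq00 : sq (0 : 'M[R]_(r, d + l)) = 0.
  by rewrite /sq big1 // => i _; rewrite big1 // => j _; rewrite mxE expr0n.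
rewrite sq00 mulr0 add0r in main.
apply: le_trans (EF_mono Delta Kge0 _ _ _ (g := fun M => 2^-1 * sq M) _) _.
  by move=> X; rewrite mulrC; exact: frob_prod.
rewrite EF_scale.
have B0 : 0 <= Bb.
  rewrite /Bb; apply: mulr_ge0 => //; apply: divr_ge0; [lra | exact: sqr_ge0].
have p0 : 0 <= rho ^+ t.+1 by exact: exprn_ge0.
have p1 : rho ^+ t.+1 <= 1 by exact: exprn_ile1.
have : (1 - rho ^+ t.+1) * Bb <= Bb by nra.
move=> h; have h' := le_trans main h.
have -> : 2 * (1 - O) / O ^+ 2 * D = 2^-1 * Bb by rewrite /Bb /a; field.
by rewrite ler_wpM2l // invr_ge0; lra.
Qed.
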